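(* Let $\Gamma_M$ ($M>0$) be a family of nonatomic routing games with a single OD pair with demand $M$, sharing the same graph, path set and edge costs $(c_e)_{e\in\mathcal E}$, where each $c_e$ is a polynomial. Then $\mathrm{PoA}(\Gamma_M)\to 1$ as $M\to \infty$.
   Context: A nonatomic routing game with a single OD pair consists of a finite directed multigraph with edge set $\mathcal E$, a nonempty finite set $\mathcal P$ of paths from an origin to a destination, a demand $M>0$, and continuous nondecreasing edge costs $c_e:[0,\infty)\to[0,\infty)$. Feasible flows: $f\in\mathbb R_+^{\mathcal P}$ with $\sum_p f_p=M$; loads $x_e=\sum_{p\ni e}f_p$; path costs $c_p(f)=\sum_{e\in p}c_e(x_e)$. A Wardrop equilibrium is a feasible $f^*$ with $c_p(f^* )\le c_{p'}(f^* )$ whenever $f^*_p>0$. Social cost $L(x)=\sum_e x_ec_e(x_e)$; $\mathrm{Opt}$ is its minimum over feasible loads, $\mathrm{Eq}=L(x^* )$ at an equilibrium load, and $\mathrm{PoA}=\mathrm{Eq}/\mathrm{Opt}$; it is assumed that $\mathrm{Opt}>0$ (otherwise $\mathrm{PoA}:=1$). *)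

(* Defs.v *)
From HB Require Import structures.
From mathcomp Require Import all_boot all_order all_algebra.
From mathcomp Require Import all_classical all_reals all_analysis.
Set Implicit Arguments. Unset Strict Implicit. Unset Printing Implicit Defensive.
Import Order.TTheory GRing.Theory Num.Theory.
Local Open Scope ring_scope.

(** Directed multigraph: vertex type [V], edge type [E], each edge [e]
    goes from [tl e] to [hd e]. *)
Definition is_od_path (V E : eqType) (tl hd : E -> V) (o d : V) (s : seq E) : bool :=
  match s with
  | [::] => false
  | e :: s' =>
      [&& tl e == o, path (fun a b => hd a == tl b) e s',
          hd (last e s') == d & uniq s]
  end.

Section Routing.
Variables (R : realType) (E P : finType).
Variable pth : P -> seq E.
Variable c : E -> {poly R}.

Definition feasible (M : R) (f : P -> R) : Prop :=
  (forall p, 0 <= f p) /\ \sum_(p : P) f p = M.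

Definition load (f : P -> R) (e : E) : R := \sum_(p : P | e \in pth p) f p.

Definition path_cost (f : P -> R) (p : P) : R :=
  \sum_(e <- pth p) (c e).[load f e].

Definition wardrop (M : R) (f : P -> R) : Prop :=
  feasible M f /\ forall p p', 0 < f p -> path_cost f p <= path_cost f p'.

Definition social_cost (x : E -> R) : R := \sum_(e : E) x e * (c e).[x e].

Definition Opt (M : R) : R :=
  inf [set social_cost (load f) | f in feasible M].

(** PoA with respect to a given equilibrium flow [feq]: Eq / Opt,
    with the convention PoA := 1 when Opt = 0. *)
Definition PoA (M : R) (feq : P -> R) : R :=
  if 0 < Opt M then social_cost (load feq) / Opt M else 1.
End Routing.

(* Main.v *)
Require Import Defs.
From HB Require Import structures.
From mathcomp Require Import all_boot all_order all_algebra.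
From mathcomp Require Import all_classical all_reals all_analysis.
From mathcomp Require Import ring lra.
Import Order.TTheory GRing.Theory Num.Theory.
Import numFieldNormedType.Exports.
Local Open Scope classical_set_scope.
Local Open Scope ring_scope.


Section Aux.
Variable R : realType.

Lemma sgn_pow (x y : R) j : 0 <= x -> 0 <= y -> 0 <= (x - y) * (x ^+ j - y ^+ j).
Proof.
move=> x0 y0; case: (lerP x y) => xy.
  apply: mulr_le0; first by rewrite subr_le0.
  by rewrite subr_le0 lerXn2r// nnegrE.
apply: mulr_ge0; first by rewrite subr_ge0 ltW.
by rewrite subr_ge0 lerXn2r// ?nnegrE// ltW.
Qed.

Lemma young (x y : R) (K : nat) : 0 <= x -> 0 <= y ->
  K.+1%:R * x * y ^+ K <= K%:R * y ^+ K.+1 + x ^+ K.+1.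
Proof.
move=> x0 y0.
have E : K%:R * y ^+ K.+1 + x ^+ K.+1 - K.+1%:R * x * y ^+ K =
   (x ^+ K.+1 - y ^+ K.+1) - K.+1%:R * y ^+ K * (x - y).
  by rewrite !exprS -addn1 natrD; ring.
rewrite -subr_ge0 E subrXX /=.
have -> : K.+1%:R * y ^+ K * (x - y) = \sum_(i < K.+1) (x - y) * y ^+ K.
  by rewrite sumr_const card_ord -mulrA mulr_natl mulrC.
rewrite big_distrr /= -sumrB; apply: sumr_ge0 => i _.
rewrite -mulrBr.
have -> : x ^+ (K - i) * y ^+ i - y ^+ K = y ^+ i * (x ^+ (K - i) - y ^+ (K - i)).
  have hi : (i <= K)%N by rewrite -ltnS.
  rewrite mulrBr -exprD addnC subnK // mulrC //.
rewrite mulrCA; apply: mulr_ge0; first exact: exprn_ge0.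
exact: sgn_pow.
Qed.

Lemma expr_mono (x : R) m n : 1 <= x -> (m <= n)%N -> x ^+ m <= x ^+ n.
Proof. by move=> x1 mn; apply: ler_weXn2l. Qed.

Lemma dom (n : nat) (b : nat -> R) (eta : R) : 0 < eta ->
  \forall M \near +oo, \sum_(i < n) b i * M ^+ i <= eta * M ^+ n.
Proof.
move=> eta0.
case: n b => [|m] b.
  near=> M; by rewrite big_ord0 expr0 mulr1 ltW.
set B := \sum_(i < m.+1) `|b i|.
near=> M.
have M1 : 1 <= M by near: M; apply: nbhs_pinfty_ge; rewrite num_real.
have MB : B / eta <= M by near: M; apply: nbhs_pinfty_ge; rewrite num_real.
have M0 : 0 <= M by apply: le_trans M1; exact: ler01.
apply: (@le_trans _ _ (B * M ^+ m)).
  rewrite /B big_distrl /=; apply: ler_sum => i _.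
  apply: (le_trans (ler_norm _)); rewrite normrM (ger0_norm (exprn_ge0 _ M0)).
  apply: ler_wpM2l => //; apply: expr_mono => //; by rewrite -ltnS.
rewrite exprS mulrA; apply: ler_wpM2r; first exact: exprn_ge0.
by rewrite mulrC -ler_pdivrMr.
Unshelve. all: by end_near.
Qed.

End Aux.


Section Poly.
Variable R : realType.
Implicit Types c : {poly R}.

Lemma sum_abs_bound n (b : nat -> R) x M : 0 <= x -> x <= M ->
  `|\sum_(i < n) b i * x ^+ i| <= \sum_(i < n) `|b i| * M ^+ i.
Proof.
move=> x0 xM; apply: (le_trans (ler_norm_sum _ _ _)); apply: ler_sum => i _.
rewrite normrM (ger0_norm (exprn_ge0 _ x0)); apply: ler_wpM2l => //.
by rewrite lerXn2r // nnegrE (le_trans x0).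
Qed.

Lemma horner_split c k x : size c = k.+1 ->
  c.[x] = \sum_(i < k) c`_i * x ^+ i + lead_coef c * x ^+ k.
Proof. by move=> sc; rewrite horner_coef sc big_ord_recr /= lead_coefE sc. Qed.

Lemma grow c k s : size c = k.+1 -> 0 < lead_coef c -> 0 < s ->
  \forall M \near +oo, lead_coef c / 2 * s ^+ k * M ^+ k <= c.[s * M].
Proof.
move=> sc lc0 s0.
have e0 : 0 < lead_coef c / 2 * s ^+ k by rewrite mulr_gt0 ?exprn_gt0 ?divr_gt0.
have := @dom R k (fun i => - (c`_i * s ^+ i)) _ e0.
apply: filterS => M HM.
rewrite (horner_split _ _ _ sc).
have -> : \sum_(i < k) c`_i * (s * M) ^+ i = - \sum_(i < k) - (c`_i * s ^+ i) * M ^+ i.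
  rewrite -sumrN; apply: eq_bigr => i _; by rewrite mulNr opprK exprMn mulrA.
rewrite exprMn; move: HM; set S := \sum_(i < k) _; lra.
Qed.

Lemma lead_ge0 c : (forall x, 0 <= x -> 0 <= c.[x]) -> 0 <= lead_coef c.
Proof.
move=> cge; rewrite leNgt; apply/negP => lc0.
have c0 : c != 0 by rewrite -lead_coef_eq0 lt_eqF.
have [k sc] : exists k, size c = k.+1.
  by exists (size c).-1; rewrite prednK // size_poly_gt0.
have e0 : 0 < - lead_coef c / 2 by rewrite divr_gt0 // oppr_gt0.
have := @dom R k (fun i => c`_i) _ e0.
move=> /(filterI (nbhs_pinfty_gt (num_real 0))) /filter_ex [M [M0 HM]].
have := cge M (ltW M0); rewrite (horner_split _ _ _ sc).
have : 0 < M ^+ k by apply: exprn_gt0.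
move: HM; set S := \sum_(i < k) _; set Mk := M ^+ k; nra.
Qed.

End Poly.

Lemma horner_le_bound (R : realType) (c : {poly R}) K (M : R) :
  (size c <= K.+1)%N -> 1 <= M -> c.[M] <= (\sum_(i < K.+1) `|c`_i|) * M ^+ K.
Proof.
move=> sc M1; have M0 : 0 <= M by apply: le_trans M1; exact: ler01.
rewrite (horner_coef_wide _ sc); apply: le_trans (ler_norm _) _.
apply: le_trans (@sum_abs_bound R K.+1 (fun i => c`_i) M M M0 (lexx _)) _.
rewrite big_distrl /=; apply: ler_sum => i _; apply: ler_wpM2l => //.
by apply: expr_mono => //; rewrite -ltnS.
Qed.


Section PE.
Variable R : realType.

Lemma PE (c : {poly R}) (K : nat) (G eta : R) :
  (forall x, 0 <= x -> 0 <= c.[x]) ->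
  (forall x y, 0 <= x -> x <= y -> c.[x] <= c.[y]) ->
  0 <= G -> 0 < eta ->
  \forall M \near +oo, forall x y, 0 <= x -> x <= M -> 0 <= y -> y <= M ->
    c.[y] <= G * M ^+ K ->
    K.+1%:R * (x * c.[y]) <= K%:R * (y * c.[y]) + x * c.[x] + eta * M ^+ K.+1.
Proof.
move=> cge cmono G0 eta0.
have Kge : 0 <= K%:R :> R by [].
case: (ltngtP (size c) K.+1) => sc.
-
  have := @dom R K (fun i => K.+1%:R * c`_i) _ eta0.
  apply: filterS => M HM x y x0 xM y0 yM _.
  have cM : K.+1%:R * c.[M] <= eta * M ^+ K.
    by rewrite (horner_coef_wide _ (sc : (size c <= K)%N)) big_distrr /=;
      under eq_bigr do rewrite mulrA.
  have M0 : 0 <= M := le_trans x0 xM.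
  have cy := cge y y0; have cx := cge x x0; have cyM := cmono _ _ y0 yM.
  have t1 : 0 <= y * c.[y] by apply: mulr_ge0.
  have t2 : 0 <= x * c.[x] by apply: mulr_ge0.
  have t3 : x * c.[y] <= M * c.[M].
    by apply: ler_pM.
  rewrite exprS.
  have : K.+1%:R * (M * c.[M]) <= eta * (M * M ^+ K).
    have -> : K.+1%:R * (M * c.[M]) = M * (K.+1%:R * c.[M]) by ring.
    have -> : eta * (M * M ^+ K) = M * (eta * M ^+ K) by ring.
    exact: ler_wpM2l.
  have k0 : 0 <= K.+1%:R :> R by [].
  have : K.+1%:R * (x * c.[y]) <= K.+1%:R * (M * c.[M]) by apply: ler_wpM2l.
  have : 0 <= K%:R * (y * c.[y]) by apply: mulr_ge0.
  lra.
-
  set k := (size c).-1.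
  have sck : size c = k.+1 by rewrite /k prednK // (leq_trans _ sc).
  have Kk : (K.+1 <= k)%N by rewrite -ltnS -sck.
  have a0 : 0 < lead_coef c.
    rewrite lt_def (@lead_ge0 R c cge) andbT lead_coef_eq0 -size_poly_gt0.
    by rewrite (leq_trans _ sc).
  set a := lead_coef c in a0 *.
  set th := eta / (K.+1%:R * (G + 1)).
  have th0 : 0 < th by rewrite divr_gt0 // mulr_gt0 //; lra.
  have ath0 : 0 < a / 2 * th ^+ k by rewrite mulr_gt0 ?exprn_gt0 // divr_gt0.
  have Hg := @grow R c k th sck a0 th0.
  have H1 : \forall M \near +oo, 1 <= (M : R) by apply: nbhs_pinfty_ge; rewrite num_real.
  have H2 : \forall M \near +oo, K.+1%:R * G / (a / 2 * th ^+ k) <= (M : R).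
    by apply: nbhs_pinfty_ge; rewrite num_real.
  near=> M => x y x0 xM y0 yM cyG.
  have M1 : 1 <= M by near: M.
  have M0 : 0 <= M by apply: le_trans M1; exact: ler01.
  have MT : K.+1%:R * G / (a / 2 * th ^+ k) <= M by near: M.
  have cth : a / 2 * th ^+ k * M ^+ k <= c.[th * M] by near: M.
  have big : K.+1%:R * G * M ^+ K <= c.[th * M].
    apply: le_trans cth.
    apply: (@le_trans _ _ (a / 2 * th ^+ k * M ^+ K.+1)); last first.
      by apply: ler_wpM2l; [exact: ltW | exact: expr_mono].
    rewrite exprS mulrA; apply: ler_wpM2r; first exact: exprn_ge0.
    by rewrite [_ * M]mulrC -ler_pdivrMr.
  have cy := cge y y0; have cx := cge x x0.
  have t1 : 0 <= K%:R * (y * c.[y]) by apply: mulr_ge0 => //; apply: mulr_ge0.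
  have t2 : 0 <= x * c.[x] by apply: mulr_ge0.
  have MK0 : 0 <= M ^+ K by apply: exprn_ge0.
  case: (lerP x (th * M)) => xth.
  + have e1 : K.+1%:R * (x * c.[y]) <= K.+1%:R * ((th * M) * (G * M ^+ K)).
      by apply: ler_wpM2l => //; apply: ler_pM.
    have e2 : K.+1%:R * (th * G) <= eta.
      rewrite /th mulrA [K.+1%:R * _]mulrC -mulrA mulrA.
      have -> : eta / (K.+1%:R * (G + 1)) * K.+1%:R = eta / (G + 1).
        by field; apply/andP; split; rewrite lt0r_neq0 //; lra.
      have q : G / (G + 1) <= 1 by rewrite ler_pdivrMr ?mul1r; lra.
      rewrite -mulrA [_^-1 * _]mulrC; nra.
    have e3 : K.+1%:R * ((th * M) * (G * M ^+ K)) = (K.+1%:R * (th * G)) * (M * M ^+ K) by ring.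
    have e4 : (K.+1%:R * (th * G)) * (M * M ^+ K) <= eta * (M * M ^+ K).
      by apply: ler_wpM2r => //; apply: mulr_ge0.
    rewrite exprS; lra.
  + have cxb : K.+1%:R * G * M ^+ K <= c.[x].
      apply: le_trans big _; apply: cmono; [by rewrite mulr_ge0 // ltW | exact: ltW].
    have e1 : K.+1%:R * c.[y] <= c.[x].
      apply: le_trans cxb; rewrite -mulrA; apply: ler_wpM2l => //.
    have e2 : x * (K.+1%:R * c.[y]) <= x * c.[x] by apply: ler_wpM2l.
    have e3 : 0 <= eta * M ^+ K.+1 by apply: mulr_ge0; [exact: ltW|exact: exprn_ge0].
    move: e2; rewrite mulrCA; lra.
-
  have a0 := @lead_ge0 R c cge.
  have := @dom R K (fun i => (K.+1 + K.+1)%:R * `|c`_i|) _ eta0.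
  apply: filterS => M HM x y x0 xM y0 yM _.
  have M0 : 0 <= M := le_trans x0 xM.
  rewrite !(@horner_split R _ _ _ sc).
  set a := lead_coef c.
  set Rb := \sum_(i < K) `|c`_i| * M ^+ i.
  have HR : (K.+1 + K.+1)%:R * Rb <= eta * M ^+ K.
    by rewrite /Rb big_distrr /=; under eq_bigr do rewrite mulrA.
  have ry := @sum_abs_bound R K (fun i => c`_i) y M y0 yM.
  have rx := @sum_abs_bound R K (fun i => c`_i) x M x0 xM.
  rewrite -/Rb in ry rx.
  set Ry := \sum_(i < K) _ in ry *; set Rx := \sum_(i < K) _ in rx *.
  have Y := @young R x y K x0 y0.
  have h1 : x * Ry <= M * Rb.
    apply: (le_trans (ler_norm _)); rewrite normrM ger0_norm //.
    by apply: ler_pM => //; apply: normr_ge0.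
  have h2 : - (y * Ry) <= M * Rb.
    rewrite -mulrN; apply: (le_trans (ler_norm _)); rewrite normrM normrN ger0_norm //.
    by apply: ler_pM => //; apply: normr_ge0.
  have h3 : - (x * Rx) <= M * Rb.
    rewrite -mulrN; apply: (le_trans (ler_norm _)); rewrite normrM normrN ger0_norm //.
    by apply: ler_pM => //; apply: normr_ge0.
  have h4 : M * ((K.+1 + K.+1)%:R * Rb) <= M * (eta * M ^+ K) by apply: ler_wpM2l.
  have h5 : a * (K.+1%:R * x * y ^+ K) <= a * (K%:R * y ^+ K.+1 + x ^+ K.+1).
    by apply: ler_wpM2l.
  have h6 : 0 <= K%:R :> R by [].
  have h7 : 0 <= M * Rb.
    by apply: mulr_ge0 => //; apply: sumr_ge0 => i _; apply: mulr_ge0 => //; apply: exprn_ge0.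
  have h8 : K%:R * - (y * Ry) <= K%:R * (M * Rb) by apply: ler_wpM2l.
  move: h1 h2 h3 h4 h5 h8 h7; rewrite !exprS natrD -addn1 natrD /=.
  set yK := y ^+ K; set xK := x ^+ K; set MK := M ^+ K; set k := K%:R.
  move=> *; nra.
Unshelve. all: by end_near.
Qed.
End PE.

Lemma LB (R : realType) (c : {poly R}) (K : nat) (N : R) :
  (forall x, 0 <= x -> 0 <= c.[x]) ->
  (forall x y, 0 <= x -> x <= y -> c.[x] <= c.[y]) ->
  (K.+1 <= size c)%N -> 0 < N ->
  \forall M \near +oo, forall x, M / N <= x ->
     lead_coef c / 2 / N ^+ (size c) * M ^+ K.+1 <= x * c.[x].
Proof.
move=> cge cmono sc N0.
set k := (size c).-1.
have sck : size c = k.+1 by rewrite /k prednK // (leq_trans _ sc).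
have Kk : (K <= k)%N by rewrite -ltnS -sck.
have a0 : 0 < lead_coef c.
  rewrite lt_def (@lead_ge0 R c cge) andbT lead_coef_eq0 -size_poly_gt0.
  by rewrite (leq_trans _ sc).
have iN0 : 0 < N^-1 by rewrite invr_gt0.
have Hg := @grow R c k N^-1 sck a0 iN0.
have H1 : \forall M \near +oo, 1 <= (M : R) by apply: nbhs_pinfty_ge; rewrite num_real.
near=> M => x Mx.
have M1 : 1 <= M by near: M.
have M0 : 0 <= M by apply: le_trans M1; exact: ler01.
have cth : lead_coef c / 2 * N^-1 ^+ k * M ^+ k <= c.[N^-1 * M] by near: M.
have MN0 : 0 <= M / N by rewrite divr_ge0 // ltW.
have x0 : 0 <= x := le_trans MN0 Mx.
have cx : c.[N^-1 * M] <= c.[x] by apply: cmono; rewrite mulrC.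
have c0 : 0 <= c.[N^-1 * M] by apply: cge; rewrite mulrC.
have MkK : M ^+ K <= M ^+ k by apply: expr_mono.
have e1 : lead_coef c / 2 * N^-1 ^+ k * M ^+ K <= c.[x].
  apply: le_trans cx; apply: le_trans cth; apply: ler_wpM2l => //.
  by apply: ltW; rewrite mulr_gt0 ?exprn_gt0 // divr_gt0.
have e2 : M / N * (lead_coef c / 2 * N^-1 ^+ k * M ^+ K) <= x * c.[x].
  apply: ler_pM => //.
  by apply: mulr_ge0; [apply: ltW; rewrite mulr_gt0 ?exprn_gt0 // divr_gt0 | apply: exprn_ge0].
apply: le_trans e2; rewrite le_eqVlt; apply/orP; left; apply/eqP.
rewrite sck exprS [M ^+ K.+1]exprS exprVn; field.
by rewrite expf_neq0 // lt0r_neq0.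
Unshelve. all: by end_near.
Qed.


Section Routing2.
Variables (R : realType) (E P : finType) (pth : P -> seq E) (c : E -> {poly R}).
Hypothesis puniq : forall p, uniq (pth p).
Hypothesis c_nonneg : forall e (x : R), 0 <= x -> 0 <= (c e).[x].
Hypothesis c_mono : forall e (x y : R), 0 <= x -> x <= y -> (c e).[x] <= (c e).[y].

Lemma load_ge0 (f : P -> R) e : (forall p, 0 <= f p) -> 0 <= load pth f e.
Proof. by move=> f0; apply: sumr_ge0. Qed.

Lemma load_leM (M : R) (f : P -> R) e : feasible M f -> load pth f e <= M.
Proof.
move=> [f0 fM]; rewrite -fM /load [X in _ <= X](bigID (fun p => e \in pth p)) /=.
by rewrite lerDl; apply: sumr_ge0.
Qed.

Lemma exch (f : P -> R) (F : E -> R) :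
  \sum_e load pth f e * F e = \sum_p f p * \sum_(e <- pth p) F e.
Proof.
rewrite /load.
under eq_bigr do rewrite big_distrl /=.
rewrite (exchange_big_dep predT) //=.
apply: eq_bigr => p _; rewrite big_distrr /= big_uniq //.
Qed.

Lemma sc_paths (f : P -> R) :
  social_cost c (load pth f) = \sum_p f p * path_cost pth c f p.
Proof. by rewrite /social_cost exch. Qed.

Lemma eq_le_path (M : R) (fs : P -> R) z : wardrop pth c M fs ->
  social_cost c (load pth fs) <= M * path_cost pth c fs z.
Proof.
move=> [[f0 fM] W]; rewrite sc_paths -fM big_distrl /=.
apply: ler_sum => p _.
case: (ltrP 0 (fs p)) => h.
  by apply: ler_wpM2l; [exact: ltW | exact: W].
have -> : fs p = 0 by apply/eqP; rewrite eq_le h f0.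
by rewrite !mul0r.
Qed.

Lemma VI (M : R) (fs f : P -> R) : 0 < M -> wardrop pth c M fs -> feasible M f ->
  social_cost c (load pth fs) <= \sum_e load pth f e * (c e).[load pth fs e].
Proof.
move=> M0 Wd [f0 fM].
have [p1 p1pos] : exists p1, 0 < fs p1.
  apply/not_existsP => H.
  have : \sum_p fs p <= 0.
    by apply: sumr_le0 => p _; rewrite leNgt; apply/negP => /(H p).
  by case: Wd => [[_ ->]] _; rewrite leNgt M0.
apply: le_trans (@eq_le_path M fs p1 Wd) _.
rewrite exch -fM big_distrl /=; apply: ler_sum => p _.
by apply: ler_wpM2l => //; case: Wd => _ W; exact: W.
Qed.

Lemma term_le_seq (s : seq E) (F : E -> R) e :
  (forall x, 0 <= F x) -> e \in s -> F e <= \sum_(x <- s) F x.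
Proof.
move=> F0; elim: s => //= a s IH; rewrite inE big_cons => /orP [/eqP -> | es].
  by rewrite lerDl; apply: sumr_ge0.
by apply: le_trans (IH es) _; rewrite lerDr.
Qed.

Lemma edge_bound (M : R) (fs : P -> R) q e : wardrop pth c M fs ->
  (c e).[load pth fs e] <= \sum_(e' <- pth q) (c e').[M] + (c e).[0].
Proof.
move=> Wd; case: (Wd) => [[f0 fM] W].
have Sge : 0 <= \sum_(e' <- pth q) (c e').[M].
  apply: sumr_ge0 => e' _; apply: c_nonneg.
  by apply: le_trans (@load_ge0 fs e f0) (@load_leM M fs e (conj f0 fM)).
case: (ltrP 0 (load pth fs e)) => h; last first.
  have -> : load pth fs e = 0 by apply/eqP; rewrite eq_le h load_ge0.
  by rewrite lerDr.
have [p [pp ep]] : exists p, 0 < fs p /\ e \in pth p.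
  apply/not_existsP => H.
  have : load pth fs e <= 0.
    apply: sumr_le0 => p ep; rewrite leNgt; apply/negP => fp.
    by apply: (H p); split.
  by rewrite leNgt h.
have e1 : (c e).[load pth fs e] <= path_cost pth c fs p.
  apply: (@term_le_seq (pth p) (fun x => (c x).[load pth fs x]) e) => // x.
  exact/c_nonneg/load_ge0.
have e2 : path_cost pth c fs p <= path_cost pth c fs q by exact: W.
have e3 : path_cost pth c fs q <= \sum_(e' <- pth q) (c e').[M].
  apply: ler_sum => e' _; apply: c_mono; first exact: load_ge0.
  exact: (@load_leM M fs e' (conj f0 fM)).
have : 0 <= (c e).[0] by apply: c_nonneg.
lra.
Qed.

Lemma pigeon (M : R) (f : P -> R) : (0 < #|P|)%N -> feasible M f -> exists p, M / #|P|%:R <= f p.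
Proof.
move=> P0 [f0 fM].
have [p0 _] := card_gt0P P0.
exists [arg max_(p > p0) f p]%O.
case: (@arg_maxP _ _ _ p0 xpredT f) => // pm _ Hm.
rewrite ler_pdivrMr ?ltr0n // -fM.
rewrite mulr_natr -sumr_const; apply: ler_sum => p _; exact: Hm.
Qed.

End Routing2.


Theorem corollary4p9
  (R : realType) (V E P : finType) (tl hd : E -> V) (o d : V)
  (pth : P -> seq E) (c : E -> {poly R})
  (P_nonempty : (0 < #|P|)%N)
  (pth_inj : injective pth)
  (pth_od : forall p, is_od_path tl hd o d (pth p))
  (c_nonneg : forall e (x : R), 0 <= x -> 0 <= (c e).[x])
  (c_mono : forall e (x y : R), 0 <= x -> x <= y -> (c e).[x] <= (c e).[y])
  (feq : R -> P -> R)
  (feq_eq : forall M : R, 0 < M -> wardrop pth c M (feq M)) :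
  PoA pth c M (feq M) @[M --> +oo] --> (1 : R).
Proof.
have puniq : forall p, uniq (pth p).
  by move=> p; move: (pth_od p); case: (pth p) => //= e s /and4P [_ _ _ ->].
have [p0 _] := card_gt0P P_nonempty.
pose S := fun p => (\max_(e <- pth p) size (c e))%N.
case: (@arg_minnP _ p0 xpredT S isT) => q0 _ HS.
have scge : forall M (f : P -> R), feasible M f -> 0 <= social_cost c (load pth f).
  move=> M f [f0 _]; apply: sumr_ge0 => e _; apply: mulr_ge0; first exact: load_ge0.
  by apply: c_nonneg; exact: load_ge0.
have hlb : forall M, has_lbound [set social_cost c (load pth f) | f in feasible M].
  by move=> M; exists 0 => _ [f Hf <-]; exact: scge Hf.
have OptLe : forall M, 0 < M -> Opt pth c M <= social_cost c (load pth (feq M)).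
  move=> M M0; apply: (ge_inf (hlb M)); exists (feq M) => //.
  by case: (feq_eq M M0).
apply/cvgrPdist_le => eps eps0.
case HK: (S q0) => [|K].
- near=> M.
  have M0 : 0 < M by near: M; apply: nbhs_pinfty_gt; rewrite num_real.
  have pc0 : path_cost pth c (feq M) q0 = 0.
    rewrite /path_cost big_seq big1 // => e he.
    have : (size (c e) <= 0)%N by rewrite -HK; apply: leq_bigmax_seq.
    by rewrite leqn0 size_poly_eq0 => /eqP ->; rewrite horner0.
  have Eq0 : social_cost c (load pth (feq M)) <= 0.
    by have := @eq_le_path R E P pth c puniq M (feq M) q0 (feq_eq M M0); rewrite pc0 mulr0.
  rewrite /PoA; have -> : (0 < Opt pth c M) = false.
    by apply/negbTE; rewrite -leNgt; exact: le_trans (OptLe M M0) Eq0.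
  by rewrite subrr normr0 ltW.
- have HqK : forall e, e \in pth q0 -> (size (c e) <= K.+1)%N.
    by move=> e he; rewrite -HK; apply: leq_bigmax_seq.
  have Hp : forall p, exists2 e, e \in pth p & (K.+1 <= size (c e))%N.
    move=> p; have := HS p isT; rewrite HK => Hge.
    case: (boolP (has (fun e => K.+1 <= size (c e))%N (pth p))) => [/hasP [e he hs]|/hasPn H].
      by exists e.
    exfalso; have : (S p <= K)%N.
      by apply/bigmax_leqP_seq => e he _; rewrite leqNgt; apply: H.
    by rewrite leqNgt Hge.
  have lcpos : forall e, (K.+1 <= size (c e))%N -> 0 < lead_coef (c e).
    move=> e hs; rewrite lt_def (@lead_ge0 R (c e) (c_nonneg e)) andbT.
    by rewrite lead_coef_eq0 -size_poly_gt0 (leq_trans _ hs).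
  pose N : R := #|P|%:R.
  have N0 : 0 < N by rewrite ltr0n.
  pose ge e := lead_coef (c e) / 2 / N ^+ size (c e).
  have ge0 : forall e, 0 <= ge e.
    move=> e; rewrite /ge; apply: divr_ge0; last by rewrite exprn_ge0 // ltW.
    apply: divr_ge0 => //.
    exact: (@lead_ge0 R (c e) (c_nonneg e)).
  pose Gam := 1 + \sum_e (ge e)^-1.
  have Gam0 : 0 < Gam.
    have : 0 <= \sum_e (ge e)^-1 by apply: sumr_ge0 => e _; rewrite invr_ge0.
    rewrite /Gam; lra.
  pose gam := Gam^-1.
  have gam0 : 0 < gam by rewrite invr_gt0.
  have gamle : forall e, (K.+1 <= size (c e))%N -> gam <= ge e.
    move=> e hs.
    have gpos : 0 < ge e by rewrite /ge !divr_gt0 ?exprn_gt0 // lcpos.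
    rewrite /gam -(invrK (ge e)) lef_pV2 ?posrE ?invr_gt0 //.
    rewrite /Gam (bigD1 e) //=.
    have : 0 <= \sum_(i | i != e) (ge i)^-1 by apply: sumr_ge0 => i _; rewrite invr_ge0.
    lra.
  pose eta := eps * gam / (#|E|%:R + 1).
  have eta0 : 0 < eta by rewrite /eta !divr_gt0 // ?mulr_gt0 //; lra.
  pose G0 := \sum_(e' <- pth q0) \sum_(i < K.+1) `|(c e')`_i|.
  pose Ge e := G0 + (c e).[0].
  have G00 : 0 <= G0 by apply: sumr_ge0 => e' _; apply: sumr_ge0.
  have Ge0 : forall e, 0 <= Ge e.
    by move=> e; apply: addr_ge0 => //; apply: c_nonneg.
  have A2 := filter_forall (@proper_pinfty_nbhs R) (fun e =>
     @PE R (c e) K (Ge e) eta (c_nonneg e) (c_mono e) (Ge0 e) eta0).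
  have A3 : \forall M \near +oo, forall e, (K.+1 <= size (c e))%N ->
      forall x, M / N <= x -> ge e * M ^+ K.+1 <= x * (c e).[x].
    apply: filter_forall => e; case: (leqP K.+1 (size (c e))) => hs.
      by apply: filterS (@LB R (c e) K N (c_nonneg e) (c_mono e) hs N0) => M HM _.
    by apply: nearW => M.
  have A1 : \forall M \near +oo, 1 <= (M : R) by apply: nbhs_pinfty_ge; rewrite num_real.
  have A23 := @filterI _ _ (@proper_pinfty_nbhs R) _ _ A2 A3.
  apply: (@filterS _ _ (@proper_pinfty_nbhs R) _ _ _ (@filterI _ _ (@proper_pinfty_nbhs R) _ _ A23 A1)) => M [[HPE HLB] M1].
  have M0 : 0 < M by apply: lt_le_trans M1; exact: ltr01.
  have Wd := feq_eq M M0.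
  set fs := feq M in Wd *.
  have [[fs0 fsM] _] := Wd.
  set Eq := social_cost c (load pth fs).
  have key : forall f, feasible M f ->
      Eq <= (1 + eps) * social_cost c (load pth f) /\
      gam * M ^+ K.+1 <= social_cost c (load pth f).
    move=> f Hf; case: (Hf) => f0 fM.
    have LBf : gam * M ^+ K.+1 <= social_cost c (load pth f).
      have [p hp] := @pigeon R P M f P_nonempty Hf.
      have [e he hs] := Hp p.
      have xe : f p <= load pth f e.
        by rewrite /load (bigD1 p he) /= lerDl; apply: sumr_ge0 => i _.
      have h1 := HLB e hs (load pth f e) (le_trans hp xe).
      have h2 : load pth f e * (c e).[load pth f e] <= social_cost c (load pth f).
        rewrite /social_cost (bigD1 e) //= lerDl; apply: sumr_ge0 => i _.
        apply: mulr_ge0; first exact: load_ge0.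
        by apply: c_nonneg; exact: load_ge0.
      have h3 : gam * M ^+ K.+1 <= ge e * M ^+ K.+1.
        by apply: ler_wpM2r; [apply: exprn_ge0; exact: ltW | exact: gamle].
      by apply: le_trans h3 (le_trans h1 h2).
    split => //.
    have vi := @VI R E P pth c puniq M fs f M0 Wd Hf.
    rewrite -/Eq in vi.
    have G0b : \sum_(e' <- pth q0) (c e').[M] <= G0 * M ^+ K.
      rewrite /G0 big_distrl /= big_seq [X in _ <= X]big_seq.
      apply: ler_sum => e' he'; exact: horner_le_bound (HqK e' he') M1.
    have per : forall e,
        K.+1%:R * (load pth f e * (c e).[load pth fs e]) <=
        K%:R * (load pth fs e * (c e).[load pth fs e]) +
        load pth f e * (c e).[load pth f e] + eta * M ^+ K.+1.
      move=> e; apply: HPE.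
      + exact: load_ge0.
      + exact: (@load_leM R E P pth M f e Hf).
      + exact: load_ge0.
      + exact: (@load_leM R E P pth M fs e (conj fs0 fsM)).
      + apply: le_trans (@edge_bound R E P pth c c_nonneg c_mono M fs q0 e Wd) _.
        rewrite /Ge mulrDl; apply: lerD => //.
        apply: ler_peMr; first exact: c_nonneg.
        exact: exprn_ege1.
    have Ssum : \sum_e K.+1%:R * (load pth f e * (c e).[load pth fs e]) <=
        \sum_e (K%:R * (load pth fs e * (c e).[load pth fs e]) +
        load pth f e * (c e).[load pth f e] + eta * M ^+ K.+1).
      by apply: ler_sum => e _; exact: per.
    rewrite -big_distrr /= !big_split /= -big_distrr /= sumr_const in Ssum.
    have E1 : \sum_i load pth fs i * (c i).[load pth fs i] = Eq by [].
    have E2 : \sum_i load pth f i * (c i).[load pth f i] = social_cost c (load pth f) by [].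
    rewrite E1 E2 in Ssum.
    set n := #|_| in Ssum.
    have hn : n = #|E| by [].
    rewrite hn -[eta * M ^+ K.+1 *+ _]mulr_natr in Ssum.
    have nE : eta * #|E|%:R <= eps * gam.
      rewrite /eta -mulrA.
      have hq : (#|E|%:R + 1)^-1 * #|E|%:R <= 1 :> R.
        by rewrite mulrC ler_pdivrMr ?mul1r; [lra | apply: ltr_wpDl].
      have : 0 < eps * gam by apply: mulr_gt0.
      nra.
    have MK0 : 0 <= M ^+ K.+1 by apply: exprn_ge0; exact: ltW.
    have nE2 : eta * M ^+ K.+1 * #|E|%:R <= eps * gam * M ^+ K.+1.
      by rewrite mulrAC; apply: ler_wpM2r.
    have e3 : eps * (gam * M ^+ K.+1) <= eps * social_cost c (load pth f).
      by apply: ler_wpM2l => //; exact: ltW.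
    have kk : K.+1%:R = K%:R + 1 :> R by rewrite -addn1 natrD.
    rewrite kk in Ssum.
    have Eq0 : 0 <= Eq by apply: (scge M fs); split.
    have k0 : 0 <= K%:R :> R by [].
    have hA : K%:R * Eq <= K%:R * \sum_i load pth f i * (c i).[load pth fs i].
      by apply: ler_wpM2l.
    move: Ssum vi hA nE2 e3; set A := \sum_i _; set L := social_cost c _.
    rewrite mulrA; move=> *; nra.
  have neS : [set social_cost c (load pth f) | f in feasible M] !=set0.
    by exists Eq; exists fs.
  have OptL : gam * M ^+ K.+1 <= Opt pth c M.
    rewrite /Opt; apply: (@lb_le_inf R _ _ neS) => _ [f Hf <-]; exact: (key f Hf).2.
  have OptU : Eq / (1 + eps) <= Opt pth c M.
    rewrite /Opt; apply: (@lb_le_inf R _ _ neS) => _ [f Hf <-].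
    rewrite ler_pdivrMr; [rewrite mulrC; exact: (key f Hf).1 | lra].
  have OptE := OptLe M M0.
  have Opos : 0 < Opt pth c M.
    apply: lt_le_trans OptL; apply: mulr_gt0 => //; exact: exprn_gt0.
  rewrite /PoA Opos -/fs -/Eq.
  have r1 : 1 <= Eq / Opt pth c M by rewrite ler_pdivlMr // mul1r.
  have r2 : Eq / Opt pth c M <= 1 + eps.
    rewrite ler_pdivrMr //; move: OptU; rewrite ler_pdivrMr; last by lra.
    by rewrite mulrC.
  rewrite ler_norml; apply/andP; split; lra.
Unshelve. all: by end_near.
Qed.
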